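(* For every temporal oriented tree $\mathcal T$, the connectivity graph $G$ of $\mathcal T$ contains no odd hole, i.e., no induced cycle of odd length at least $5$.
   Context: A temporal digraph is a pair $(D,\lambda)$ with $D=(V,A)$ a finite digraph and $\lambda:A\to 2^{\{1,\dots,t_{\max}\}}$ giving the time-steps at which each arc is active. A temporal oriented tree $\mathcal T=(T,\lambda)$ is one whose underlying digraph $T$ is an orientation of a tree. A temporal path is a sequence $(v_1,v_2,t_1),\dots,(v_{k-1},v_k,t_{k-1})$ with pairwise distinct $v_i$, $\overrightarrow{v_iv_{i+1}}\in A$, $t_i\in\lambda(\overrightarrow{v_iv_{i+1}})$ and $t_1<\dots<t_{k-1}$. Two vertices $u\ne v$ are temporally connected if there is a temporal path from $u$ to $v$ or from $v$ to $u$. The connectivity graph of $\mathcal T$ is the undirected graph $G$ with $V(G)=V(T)$ and $uv\in E(G)$ iff $u\neq v$ and $u,v$ are temporally connected. *)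

(* Defs.v *)
From mathcomp Require Import all_boot.
Set Implicit Arguments. Unset Strict Implicit. Unset Printing Implicit Defensive.

Definition und_adj (V : finType) (A : rel V) : rel V := fun u v => A u v || A v u.

(* A is an orientation of a tree: no loops, no pair of opposite arcs (so the
   underlying graph is simple and each edge is oriented exactly once), the
   underlying undirected graph is nonempty, connected and acyclic. *)
Definition is_oriented_tree (V : finType) (A : rel V) : Prop :=
  [/\ 0 < #|V|,
      (forall v, ~~ A v v),
      (forall u v, A u v -> ~~ A v u),
      (forall u v, connect (und_adj A) u v) &
      (forall c : seq V, uniq c -> 3 <= size c -> ~~ cycle (und_adj A) c)].

(* lam : V -> V -> nat -> bool; lam u v t means arc uv is active at time t.
   Time labels lie in {1, ..., tmax}. *)
Definition valid_labels (V : finType) (A : rel V) (tmax : nat)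
  (lam : V -> V -> nat -> bool) : Prop :=
  forall u v t, lam u v t -> A u v /\ 1 <= t <= tmax.

Definition temporal_path (V : finType) (A : rel V)
  (lam : V -> V -> nat -> bool) (u v : V) : Prop :=
  exists (s : seq V) (ts : seq nat),
    [/\ size ts = size s, uniq (u :: s), last u s = v,
        sorted ltn ts &
        forall i, i < size s ->
          A (nth u (u :: s) i) (nth u s i) /\
          lam (nth u (u :: s) i) (nth u s i) (nth 0 ts i)].

Definition conn_edge (V : finType) (A : rel V)
  (lam : V -> V -> nat -> bool) (u v : V) : Prop :=
  u <> v /\ (temporal_path A lam u v \/ temporal_path A lam v u).

Definition induced_cycle (V : finType) (E : V -> V -> Prop) (c : seq V) : Prop :=
  if c is x0 :: _ then
  [/\ uniq c, 3 <= size c &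
      forall i j, i < size c -> j < size c ->
        (E (nth x0 c i) (nth x0 c j) <->
         (j == (i.+1 %% size c)) || (i == (j.+1 %% size c)))]
  else False.

Definition odd_hole (V : finType) (E : V -> V -> Prop) (c : seq V) : Prop :=
  [/\ induced_cycle E c, 5 <= size c & odd (size c)].

(* Main.v *)
Require Import Defs.
From mathcomp Require Import all_boot zify.
From Stdlib Require Import Classical.
Set Implicit Arguments. Unset Strict Implicit. Unset Printing Implicit Defensive.

Definition Rb (V : finType) (A : rel V) (b : V) : rel V :=
  fun x y => [&& und_adj A x y, x != b & y != b].

Lemma Rb_sym (V : finType) (A : rel V) (b : V) : symmetric (@Rb V A b).
Proof. move=> x y; rewrite /Rb /und_adj orbC; by case: (x != b); case: (y != b); rewrite ?andbF. Qed.

Lemma tp_path (V : finType) (A : rel V) (lam : V -> V -> nat -> bool) (u : V) s ts :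
  size ts = size s ->
  (forall i, i < size s -> A (nth u (u :: s) i) (nth u s i) /\
          lam (nth u (u :: s) i) (nth u s i) (nth 0 ts i)) ->
  path A u s.
Proof. move=> _ H; apply/(pathP u) => i /H []. done. Qed.

Lemma path_conn (V : finType) (A : rel V) (u b : V) s :
  path A u s -> b \notin u :: s -> connect (Rb A b) u (last u s).
Proof.
move=> P Hb; apply/connectP; exists s => //.
elim: s u Hb P => //= x s IH u.
rewrite !inE !negb_or => /andP [Hb /andP [Hbx Hbs]] /andP [Hux Hp].
rewrite /Rb /und_adj Hux /= eq_sym Hb eq_sym Hbx /=.
apply: IH => //; by rewrite inE negb_or Hbx.
Qed.

Lemma tp_prefix (V : finType) (A : rel V) (lam : V -> V -> nat -> bool) (u : V) s ts i :
  size ts = size s -> uniq (u :: s) -> sorted ltn ts ->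
  (forall i, i < size s -> A (nth u (u :: s) i) (nth u s i) /\
          lam (nth u (u :: s) i) (nth u s i) (nth 0 ts i)) ->
  i < size s -> temporal_path A lam u (nth u s i).
Proof.
move=> Hs Hu Hso Hn Hi.
exists (take i.+1 s), (take i.+1 ts); split.
- rewrite !size_takel //; lia.
- have -> : u :: take i.+1 s = take i.+2 (u :: s) by [].
  exact: take_uniq.
- rewrite (take_nth u Hi) last_rcons //.
- exact: take_sorted.
- move=> m; rewrite size_takel // => Hm.
  have -> : u :: take i.+1 s = take i.+2 (u :: s) by [].
  rewrite !nth_take //; last lia.
  apply: Hn; lia.
Qed.

Lemma tp_suffix (V : finType) (A : rel V) (lam : V -> V -> nat -> bool) (u : V) s ts i :
  size ts = size s -> uniq (u :: s) -> sorted ltn ts -> 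
  (forall i, i < size s -> A (nth u (u :: s) i) (nth u s i) /\
          lam (nth u (u :: s) i) (nth u s i) (nth 0 ts i)) ->
  i < size s -> temporal_path A lam (nth u s i) (last u s).
Proof.
move=> Hs Hu Hso Hn Hi.
set b := nth u s i.
have Hd : drop i s = b :: drop i.+1 s by rewrite (drop_nth u Hi).
exists (drop i.+1 s), (drop i.+1 ts); split.
- by rewrite !size_drop Hs.
- rewrite -Hd; apply: drop_uniq; by case/andP: Hu.
- rewrite -{2}(cat_take_drop i s) Hd last_cat //.
- exact: drop_sorted.
- move=> m; rewrite size_drop => Hm.
  have E1 : nth b (b :: drop i.+1 s) m = nth u (u :: s) (i.+1 + m).
    rewrite -Hd nth_drop /= (set_nth_default u); last by lia.
    done.
  rewrite E1 (set_nth_default u); last by rewrite size_drop.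
  rewrite !nth_drop; apply: Hn; lia.
Qed.

Lemma path_Rb_notin (V : finType) (A : rel V) b p s :
  path (Rb A b) p s -> b \notin s.
Proof.
elim: s p => //= x s IH p /andP [H Hp].
rewrite inE negb_or (IH _ Hp) andbT.
by case/and3P: H => _ _; rewrite eq_sym.
Qed.

Lemma cycle_contra (V : finType) (A : rel V) (b p q : V) :
  is_oriented_tree A -> connect (Rb A b) p q -> p != q -> p != b ->
  und_adj A b p -> und_adj A q b -> False.
Proof.
case=> _ _ _ _ Hac /connectP [s0 Ps0 ->] Hpq Hpb Hbp Hqb.
move: Hpq Hqb; case: (shortenP Ps0) => p' Pp' Up' _ Hpq Hqb.
have Hbn := path_Rb_notin Pp'.
have Pu : path (und_adj A) p p' by apply: sub_path Pp' => x y /and3P [].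
have Hne : p' != [::] by move: Hpq; case: (p') => //=; rewrite eqxx.
have := Hac (b :: p :: p').
move: Up'; rewrite /= inE negb_or eq_sym Hpb Hbn /= => -> .
have -> : 2 < (size p').+2 by case: (p') Hne.
by rewrite rcons_path Pu Hbp Hqb => /(_ isT isT).
Qed.

Lemma transit_contra (V : finType) (A : rel V) lam (x b y : V) :
  is_oriented_tree A -> temporal_path A lam x b -> temporal_path A lam b y ->
  connect (Rb A b) x y -> x != b -> y != b -> False.
Proof.
move=> Ht [s [ts [Hs Hu Hl Hso Hn]]] [s' [ts' [Hs' Hu' Hl' Hso' Hn']]] Hxy Hxb Hyb.
have P := tp_path Hs Hn; have P' := tp_path Hs' Hn'.
case/lastP: s Hs Hu Hl Hso Hn P => [|s1 b1] Hs Hu Hl Hso Hn P.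
  by move: Hxb; rewrite -Hl eqxx.
rewrite last_rcons in Hl; subst b1.
case: s' Hs' Hu' Hl' Hso' Hn' P' => [|c' s2] Hs' Hu' Hl' Hso' Hn' P'.
  by move: Hyb; rewrite -Hl' eqxx.
move: P; rewrite rcons_path => /andP [P1 Ha].
move: P' => /= /andP [Hc P2].
have Hbs1 : b \notin x :: s1.
  by move: Hu; rewrite -rcons_cons rcons_uniq => /andP [].
have Hbs2 : b \notin c' :: s2 by case/andP: Hu'.
have C1 := path_conn P1 Hbs1.
have C2 := path_conn P2 Hbs2.
rewrite /= in Hl'; rewrite Hl' in C2.
have Hsym := sym_connect_sym (Rb_sym A b).
have C : connect (Rb A b) (last x s1) c'.
  have C1' : connect (Rb A b) (last x s1) x by rewrite Hsym.
  have C2' : connect (Rb A b) y c' by rewrite Hsym.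
  exact: connect_trans C1' (connect_trans Hxy C2').
apply: (cycle_contra Ht C).
- apply/eqP => E; case: Ht => _ _ Has _ _.
  by move: (Has _ _ Ha); rewrite E Hc.
- by apply: contraNneq Hbs1 => <-; exact: mem_last.
- by rewrite /und_adj Ha orbT.
- by rewrite /und_adj Hc orbT.
Qed.

Lemma nxE k i : i < k -> i.+1 %% k = if i.+1 == k then 0 else i.+1.
Proof. move=> H; case: eqP => [->|h]; first by rewrite modnn. rewrite modn_small //; lia. Qed.

Lemma adj_nat k x y : x < k -> y < k ->
  ((y == x.+1 %% k) || (x == y.+1 %% k)) =
  [|| (y == x.+1), (x == y.+1), ((x == k.-1) && (y == 0)) | ((y == k.-1) && (x == 0))].
Proof.
move=> Hx Hy; rewrite (nxE Hx) (nxE Hy).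
case: ifP => /eqP H1; case: ifP => /eqP H2; apply/idP/idP; lia.
Qed.

Lemma edge_avoid (V : finType) (A : rel V) lam (u v b : V) :
  temporal_path A lam u v -> u != b -> v != b ->
  ~ (conn_edge A lam u b /\ conn_edge A lam v b) -> connect (Rb A b) u v.
Proof.
move=> [s [ts [Hs Hu Hl Hso Hn]]] Hub Hvb Hno.
have P := tp_path Hs Hn.
case Hbs: (b \in s); last first.
  by rewrite -Hl; apply: path_conn P _; rewrite inE negb_or eq_sym Hub Hbs.
exfalso; apply: Hno.
have Hi : index b s < size s by rewrite index_mem.
have Hb : nth u s (index b s) = b by rewrite nth_index.
split.
- split; first by apply/eqP.
  left; rewrite -Hb; exact: tp_prefix Hs Hu Hso Hn Hi.
- split; first by apply/eqP.
  right; rewrite -Hl -Hb; exact: tp_suffix Hs Hu Hso Hn Hi.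
Qed.
Unset Implicit Arguments.

Theorem mainTheorem8 (V : finType) (A : rel V) (tmax : nat)
  (lam : V -> V -> nat -> bool) :
  is_oriented_tree A -> valid_labels A tmax lam ->
  forall c : seq V, ~ odd_hole (conn_edge A lam) c.
Proof.
move=> Ht _ [|x0 c'] [] //= [Hu Hk3 Hind] Hk Hodd.
set cs := x0 :: c' in Hu Hk3 Hind Hk Hodd.
set k := size cs in Hk3 Hind Hk Hodd.
set f := nth x0 cs.
have Hf : forall i j, i < k -> j < k -> (f i == f j) = (i == j).
  by move=> i j Hi Hj; rewrite nth_uniq.
have Hadj : forall i j, i < k -> j < k -> conn_edge A lam (f i) (f j) <->
  [|| (j == i.+1), (i == j.+1), ((i == k.-1) && (j == 0)) | ((j == k.-1) && (i == 0))].
  by move=> i j Hi Hj; rewrite -adj_nat //; apply: Hind.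
have Eok : forall t t' j, t < k -> t' < k -> j < k -> t != j -> t' != j ->
    conn_edge A lam (f t) (f t') -> connect (Rb A (f j)) (f t) (f t').
  move=> t t' j Ht1 Ht2 Hj Htj Ht'j E.
  have Hsym := sym_connect_sym (Rb_sym A (f j)).
  have Ntri : forall u v : nat, (u == t) && (v == t') || (u == t') && (v == t) ->
      ~ (conn_edge A lam (f u) (f j) /\ conn_edge A lam (f v) (f j)).
    move=> u v Huv [E1 E2].
    have Hu' : u < k by case/orP: Huv => /andP [/eqP -> _].
    have Hv' : v < k by case/orP: Huv => /andP [_ /eqP ->].
    have Htt : t != t' by rewrite -Hf //; case: E => /eqP.
    move: (E1) (E2) E => /Hadj - /(_ Hu' Hj) H1 /Hadj - /(_ Hv' Hj) H2 /Hadj - /(_ Ht1 Ht2) H3.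
    have Hkk : k = (size c').+1 by []. clear -Hkk Hk Huv Hu' Hv' Htt H1 H2 H3 Htj Ht'j. lia.
  case: (E) => _ [T|T].
  - apply: edge_avoid T _ _ (Ntri t t' _); rewrite ?Hf ?eqxx //.
  - rewrite Hsym; apply: edge_avoid T _ _ (Ntri t' t _); rewrite ?Hf ?eqxx ?orbT //.
have Hkk : k = (size c').+1 by [].
have Hsym : forall b, connect_sym (Rb A b) by move=> b; apply: sym_connect_sym (Rb_sym A b).
have Chain : forall j lo hi, j < k -> lo <= hi -> hi < k -> (j < lo) || (hi < j) ->
    connect (Rb A (f j)) (f lo) (f hi).
  move=> j lo hi Hj Hlh Hhk Hjr.
  elim: hi Hlh Hhk Hjr => [|h IH] Hlh Hhk Hjr.
    have -> : lo = 0 by lia. exact: connect0.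
  case: (ltnP h lo) => Hhl.
    have -> : lo = h.+1 by lia. exact: connect0.
  apply: connect_trans (IH _ _ _) _; try lia.
  apply: Eok; try lia.
  apply/Hadj; lia.
pose TP := temporal_path A lam.
pose O t := TP (f t) (f (t.+1 %% k)).
have Hmk : forall t, t.+1 %% k < k by move=> t; rewrite ltn_pmod // Hkk.
have Tr : exists j p n, [/\ p < k, j < k, n < k & (j = p.+1 %% k /\ n = j.+1 %% k) /\
   ((TP (f p) (f j) /\ TP (f j) (f n)) \/ (TP (f n) (f j) /\ TP (f j) (f p)))].
  apply: NNPP => H.
  have Ed : forall t, t < k -> O t \/ TP (f (t.+1 %% k)) (f t).
    move=> t Ht0.
    have E0 : conn_edge A lam (f t) (f (t.+1 %% k)) by apply/(Hind t _ Ht0 (Hmk t)); rewrite eqxx.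
    by case: E0 => _ [?|?]; [left|right].
  have Alt : forall t, t < k -> (O (t.+1 %% k) <-> ~ O t).
    move=> t Ht0; split.
    - move=> Oj Ot; apply: H; exists (t.+1 %% k), t, ((t.+1 %% k).+1 %% k); split => //; split => //.
      by left.
    - move=> nOt; apply: NNPP => nOj; apply: H.
      exists (t.+1 %% k), t, ((t.+1 %% k).+1 %% k); split => //; split => //.
      right; split.
      + by case: (Ed _ (Hmk t)).
      + by case: (Ed _ Ht0).
  have Par : forall t, t < k -> (O t <-> if odd t then ~ O 0 else O 0).
    elim => [|t IH] Ht0 /=; first by [].
    have := Alt t (ltnW Ht0); rewrite (nxE (ltnW Ht0)).
    have -> : (t.+1 == k) = false by apply/eqP; lia.
    have := IH (ltnW Ht0).
    case: (odd t) => /= H1 H2; case: (classic (O 0)) => H0; tauto.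
  have := Par (size c'); rewrite (negbTE Hodd) Hkk => /(_ (ltnSn _)).
  have := Alt (size c'); rewrite Hkk modnn => /(_ (ltnSn _)).
  case: (classic (O 0)) => H0; tauto.
case: Tr => j [p [n [Hp Hj Hn [[Hjp Hnj] HT]]]].
have {}Hjp : (j == p.+1) || ((p == k.-1) && (j == 0)).
  by move: Hjp; rewrite (nxE Hp); case: ifP => /eqP; lia.
have {}Hnj : (n == j.+1) || ((j == k.-1) && (n == 0)).
  by move: Hnj; rewrite (nxE Hj); case: ifP => /eqP; lia.
have Cpn : connect (Rb A (f j)) (f p) (f n).
  case: (j =P 0) => [Hj0|Hj0].
    have hp : p = k.-1 by lia.
    have hn : n = 1 by lia.
    rewrite hp hn Hsym; apply: Chain; lia.
  case: (j =P k.-1) => [Hjk|Hjk].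
    have hp : p = k.-2 by lia.
    have hn : n = 0 by lia.
    rewrite hp hn Hsym; apply: Chain; lia.
  apply: (connect_trans (y := f 0)).
    rewrite Hsym; apply: Chain; lia.
  apply: (connect_trans (y := f k.-1)).
    apply: Eok; try lia. apply/Hadj; lia.
  rewrite Hsym; apply: Chain; lia.
have Hpj : f p != f j by rewrite Hf //; lia.
have Hnj' : f n != f j by rewrite Hf //; lia.
case: HT => [[T1 T2]|[T1 T2]].
- exact: transit_contra Ht T1 T2 Cpn Hpj Hnj'.
- by apply: transit_contra Ht T1 T2 _ Hnj' Hpj; rewrite Hsym.
Qed.
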